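(* For each integer $n\ge1$, let $V_n=\{a_1,\dots,a_{n+1}\}$ consist of $n+1$ pairwise different letters and $L_{9,n}=\{a_1\}^+\{a_2\}^+\cdots\{a_{n+1}\}^+$. Then $L_{9,n}\in\mathrm{SLT}_2\setminus\mathrm{RL}_n^V$.
   Context: Strictly locally testable languages: let $V$ be an alphabet and $k\ge1$. For $B,I,E\subseteq V^k$ and $F\subseteq V^{\le k-1}$, $\mathrm{slt}(B,I,E,F)$ is the language over $V$ consisting of all words in $F$ together with all words $a_1\cdots a_n$ ($a_i\in V$, $n\ge k$) with $a_1\cdots a_k\in B$, $a_{j+1}\cdots a_{j+k}\in I$ for all $1\le j\le n-k-1$, and $a_{n-k+1}\cdots a_n\in E$. $\mathrm{SLT}_k$ is the family of languages of this form. A right-linear grammar is $G=(N,T,P,S)$ with rules $A\to wB$ or $A\to w$ ($A,B\in N$, $w\in T^*$). For a regular language $L$, $\mathrm{Var}_{RL}(L)$ is the minimum of $|N|$ over all right-linear grammars generating $L$; $\mathrm{RL}_n^V=\{L\text{ regular}:\mathrm{Var}_{RL}(L)\le n\}$. *)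

(* Defs.v *)
From mathcomp Require Import all_boot.
Set Implicit Arguments. Unset Strict Implicit. Unset Printing Implicit Defensive.

Definition language (V : Type) := seq V -> Prop.

(* slt(B,I,E,F) for a given k, exactly as in the paper:
   all words of F, together with all words a_1..a_n, n >= k, with
   a_1..a_k in B, a_{j+1}..a_{j+k} in I for 1 <= j <= n-k-1,
   and a_{n-k+1}..a_n in E. *)
Definition slt (V : Type) (k : nat) (B I E F : language V) : language V :=
  fun w => F w \/
    (k <= size w /\ B (take k w) /\
     (forall j, 1 <= j -> j <= size w - k - 1 -> I (take k (drop j w))) /\
     E (drop (size w - k) w)).

Definition in_SLT (V : Type) (k : nat) (L : language V) : Prop :=
  exists B I E F : language V,
    (forall w, B w -> size w = k) /\
    (forall w, I w -> size w = k) /\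
    (forall w, E w -> size w = k) /\
    (forall w, F w -> size w <= k - 1) /\
    (forall w, L w <-> slt k B I E F w).

(* Right-linear grammar with m nonterminals ('I_m) over terminals V.
   A rule (A, w, Some B) is A -> wB, a rule (A, w, None) is A -> w. *)
Record rl_grammar (V : Type) (m : nat) := RLGrammar {
  rl_rules : seq ('I_m * seq V * option 'I_m);
  rl_start : 'I_m
}.

Inductive derives (V : eqType) (m : nat) (G : rl_grammar V m) : 'I_m -> seq V -> Prop :=
  | derives_term A w : (A, w, None) \in rl_rules G -> derives G A w
  | derives_step A u B w : (A, u, Some B) \in rl_rules G -> derives G B w ->
      derives G A (u ++ w).

Definition rl_lang (V : eqType) (m : nat) (G : rl_grammar V m) : language V :=
  derives G (rl_start G).

Definition in_RLV (V : eqType) (n : nat) (L : language V) : Prop :=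
  exists m (G : rl_grammar V m), m <= n /\ (forall w, rl_lang G w <-> L w).

(* L_{9,n} = {a_1}^+ ... {a_{n+1}}^+ over V_n = 'I_(n+1), letter a_{i+1} = i. *)
Definition L9 (n : nat) : language 'I_n.+1 :=
  fun w => exists c : 'I_n.+1 -> nat, (forall i, 0 < c i) /\
    w = flatten [seq nseq (c i) i | i <- enum 'I_n.+1].
Arguments L9 n : clear implicits.

(* Main.v *)
Require Import Defs.
From mathcomp Require Import all_boot.
From mathcomp Require Import zify.
Set Implicit Arguments. Unset Strict Implicit. Unset Printing Implicit Defensive.

Definition stepn (x y : nat) := (y == x) || (y == x.+1).

Lemma stepn_leq x y : stepn x y -> x <= y.
Proof. by case/orP => /eqP ->. Qed.

Lemma path_last_ge a s : path stepn a s -> a <= last a s.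
Proof.
elim: s a => //= y s IH a /andP[h p].
have := IH y p; have := stepn_leq h; lia.
Qed.

Lemma nseq_path (a m : nat) : path stepn a (nseq m a).
Proof. by elim: m => //= m ->; rewrite /stepn eqxx. Qed.

Lemma nseq_last (a m : nat) : last a (nseq m a) = a.
Proof. by elim: m. Qed.

Lemma flat_char (a k : nat) (d : nat -> nat) : (forall i, 0 < d i) -> exists s,
  flatten [seq nseq (d i) i | i <- iota a k.+1] = a :: s /\
  path stepn a s /\ last a s = a + k.
Proof.
move=> dpos; elim: k a => [|k IH] a.
  rewrite /= cats0; case E: (d a) => [|m]; first by have := dpos a; rewrite E.
  exists (nseq m a); split => //; split; first exact: nseq_path.
  by rewrite nseq_last addn0.
have [s [E [p l]]] := IH a.+1.
have -> : iota a k.+2 = [:: a] ++ iota a.+1 k.+1 by [].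
rewrite map_cat flatten_cat E /= cats0.
case Ed: (d a) => [|m]; first by have := dpos a; rewrite Ed.
exists (nseq m a ++ a.+1 :: s); split => //; split.
  by rewrite cat_path nseq_path nseq_last /= /stepn eqxx orbT p.
by rewrite last_cat nseq_last /= l; lia.
Qed.

Lemma flat_char_inv (a : nat) (s : seq nat) : path stepn a s -> exists d, (forall i, 0 < d i) /\
  a :: s = flatten [seq nseq (d i) i | i <- iota a (last a s - a).+1].
Proof.
elim: s a => [|y s IH] a /=.
  by move=> _; exists (fun _ => 1); rewrite subnn.
case/andP => h p; have [d [dpos E]] := IH y p; have hy := path_last_ge p.
case/orP: h => /eqP Ey; subst y.
  exists (fun i => if i == a then (d a).+1 else d i); split.
    by move=> i; case: eqP.
  have Em : [seq nseq (if i == a then (d a).+1 else d i) i | i <- iota a.+1 (last a s - a)] = [seq nseq (d i) i | i <- iota a.+1 (last a s - a)].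
    apply/eq_in_map => i; rewrite mem_iota => /andP[h _].
    have : i != a by lia.
    by move/negbTE ->.
  by rewrite Em eqxx /= E.
exists (fun i => if i == a then 1 else d i); split.
  by move=> i; case: eqP.
have Em : [seq nseq (if i == a then 1 else d i) i | i <- iota a.+1 (last a.+1 s - a)] = [seq nseq (d i) i | i <- iota a.+1 (last a.+1 s - a)].
  apply/eq_in_map => i; rewrite mem_iota => /andP[h _].
  have : i != a by lia.
  by move/negbTE ->.
rewrite Em.
have -> : last a.+1 s - a = (last a.+1 s - a.+1).+1 by lia.
by rewrite eqxx; congr cons; rewrite E.
Qed.

Lemma map_val_flat n (c : 'I_n.+1 -> nat) (d : nat -> nat) :
  (forall i, c i = d (val i)) ->
  map val (flatten [seq nseq (c i) i | i <- enum 'I_n.+1]) =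
  flatten [seq nseq (d j) j | j <- iota 0 n.+1].
Proof.
move=> cd; rewrite map_flatten -map_comp -val_enum_ord -map_comp.
congr flatten; apply: eq_map => i /=.
by rewrite map_nseq cd.
Qed.

Lemma L9_char n (w : seq 'I_n.+1) : L9 n w <->
  exists s, map val w = 0 :: s /\ path stepn 0 s /\ last 0 s = n.
Proof.
split.
  case=> c [cpos ->].
  rewrite (@map_val_flat n c (fun j => c (inord j))); last by move=> i; rewrite inord_val.
  have [s [E [p l]]] := @flat_char 0 n (fun j => c (inord j)) (fun i => cpos _).
  by exists s; rewrite E.
case=> s [E [p l]].
have [d [dpos E2]] := flat_char_inv p.
rewrite l subn0 in E2.
exists (fun i => d (val i)); split => //.
apply: (@inj_map _ _ val val_inj).
by rewrite E E2 (@map_val_flat n _ d).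
Qed.

Definition Qw n (w : seq 'I_n.+1) := 1 < size w /\
  (forall j, j.+1 < size w -> stepn (nth ord0 w j) (nth ord0 w j.+1)) /\
  nat_of_ord (nth ord0 w 0) = 0 /\ nat_of_ord (nth ord0 w (size w).-1) = n.

Lemma L9_Q n (w : seq 'I_n.+1) : 0 < n -> (L9 n w <-> Qw w).
Proof.
move=> Hn; rewrite L9_char; split.
  case=> s [E [p l]].
  have Hs : size w = (size s).+1 by rewrite -(size_map val) E.
  have s0 : 0 < size s by case: s {E p Hs} l => //= l0; rewrite -l0 in Hn.
  split; first by rewrite Hs.
  split.
    move=> j hj.
    rewrite -!(nth_map ord0 0 val) ?(ltnW hj) // E /=.
    by apply: (pathP 0 p); rewrite -ltnS -Hs.
  split.
    by rewrite -(nth_map ord0 0 val) ?Hs // E.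
  rewrite -(nth_map ord0 0 val) ?Hs // E /=.
  by rewrite -l -nth_last; case: (size s) s0.
case: w => [|x w'] [h2 [Hst [h0 hl]]] //.
rewrite /= in h0.
have P : path stepn (val x) (map val w').
  apply/(pathP 0) => j; rewrite size_map => hj.
  have -> : val x :: map val w' = map val (x :: w') by [].
  rewrite !(nth_map ord0) //; last by rewrite /= ltnS ltnW.
  by apply: (Hst j); rewrite /= ltnS.
have L : last (val x) (map val w') = n.
  by rewrite last_map; rewrite nth_last in hl.
have vx : val x = 0 := h0.
rewrite vx in P L; exists (map val w'); by rewrite /= vx.
Qed.

Definition Bl n : language 'I_n.+1 := fun t =>
  exists x y : 'I_n.+1, t = [:: x; y] /\ nat_of_ord x = 0 /\ stepn x y.
Definition Il n : language 'I_n.+1 := fun t =>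
  exists x y : 'I_n.+1, t = [:: x; y] /\ stepn x y.
Definition El n : language 'I_n.+1 := fun t =>
  exists x y : 'I_n.+1, t = [:: x; y] /\ nat_of_ord y = n /\ stepn x y.
Definition Fl n : language 'I_n.+1 := fun _ => False.
Arguments Bl n : clear implicits.
Arguments Il n : clear implicits.
Arguments El n : clear implicits.
Arguments Fl n : clear implicits.

Lemma win (T : Type) (x0 : T) (w : seq T) j : j.+1 < size w ->
  take 2 (drop j w) = [:: nth x0 w j; nth x0 w j.+1].
Proof.
move=> h; rewrite (drop_nth x0) ?(ltnW h) // (drop_nth x0) //=.
by rewrite take0.
Qed.

Lemma dropE (T : Type) (x0 : T) (w : seq T) : 1 < size w ->
  drop (size w - 2) w = [:: nth x0 w (size w).-1.-1; nth x0 w (size w).-1].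
Proof.
move=> h.
rewrite -(@take_oversize _ 2 (drop _ w)); last by rewrite size_drop; lia.
rewrite (win x0); last by lia.
by congr [:: nth _ _ _; nth _ _ _]; lia.
Qed.

Lemma slt_Q n (w : seq 'I_n.+1) :
  slt 2 (Bl n) (Il n) (El n) (Fl n) w <-> Qw w.
Proof.
split.
  case => // [[h2 [HB [HI HE]]]].
  rewrite -[w in take _ w]drop0 (win ord0) // in HB.
  case: HB => x [y [[<- <-] [h0 s0]]].
  rewrite (dropE ord0) // in HE.
  case: HE => x' [y' [[Ex Ey] [hn st]]].
  split => //; split; last by rewrite Ey.
  move=> j hj.
  case: (posnP j) => [->|jpos] //.
  case: (ltnP j.+1 (size w).-1) => hj2.
    have := HI j jpos; rewrite (win ord0) // => /(_ ltac:(lia)).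
    by case => a [b [[<- <-]]].
  have Ej : j = (size w).-1.-1 by lia.
  have Ej1 : j.+1 = (size w).-1 by lia.
  by rewrite Ej1 {1}Ej Ex Ey.
case=> h2 [Hst [h0 hn]]; right; split => //; split.
  rewrite -[w in take _ w]drop0 (win ord0) //.
  by exists (nth ord0 w 0), (nth ord0 w 1); split => //; split => //; apply: Hst.
split.
  move=> j h1 hj; rewrite (win ord0); last by lia.
  by exists (nth ord0 w j), (nth ord0 w j.+1); split => //; apply: Hst; lia.
rewrite (dropE ord0) //.
exists (nth ord0 w (size w).-1.-1), (nth ord0 w (size w).-1); split => //; split => //.
have Ej1 : (size w).-1 = ((size w).-1.-1).+1 by lia.
by rewrite {2}Ej1; apply: Hst; lia.
Qed.

Lemma part1 n : 0 < n -> in_SLT 2 (L9 n).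
Proof.
move=> Hn; exists (Bl n), (Il n), (El n), (Fl n).
split; first by move=> w [x [y [-> _]]].
split; first by move=> w [x [y [-> _]]].
split; first by move=> w [x [y [-> _]]].
split => // w.
by rewrite slt_Q L9_Q.
Qed.

Inductive reach (V : eqType) m (G : rl_grammar V m) : 'I_m -> seq V -> 'I_m -> Prop :=
  | reach0 A : reach G A [::] A
  | reachS A u B p C : (A, u, Some B) \in rl_rules G -> reach G B p C ->
      reach G A (u ++ p) C.

Lemma reach_derives (V : eqType) m (G : rl_grammar V m) A p B s :
  reach G A p B -> derives G B s -> derives G A (p ++ s).
Proof.
elim => // A0 u B0 p0 C R _ IH D.
rewrite -catA; apply: derives_step R (IH D).
Qed.

Definition Mb (V : eqType) m (G : rl_grammar V m) :=
  \sum_(r <- rl_rules G) size r.1.2.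

Lemma rule_le (V : eqType) m (G : rl_grammar V m) r :
  r \in rl_rules G -> size r.1.2 <= Mb G.
Proof. by move=> H; rewrite /Mb (big_rem _ H) /= leq_addr. Qed.

Lemma split_der (V : eqType) m (G : rl_grammar V m) A w k :
  derives G A w -> k + Mb G < size w ->
  exists B p s, reach G A p B /\ derives G B s /\ w = p ++ s /\
    k < size p <= k + Mb G.
Proof.
move=> D; elim: D k => [A0 w0 R | A0 u B0 w0 R D IH] k hk.
  have := rule_le R; rewrite /=; lia.
have hu := rule_le R; rewrite /= in hu; rewrite size_cat in hk.
case: (ltnP k (size u)) => hku.
  exists B0, u, w0; split; first by rewrite -[u]cats0; apply: reachS R (reach0 _ _).
  by split => //; split => //; lia.
have [B [p [s [Rp [Ds [E Hs]]]]]] := IH (k - size u) ltac:(lia).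
exists B, (u ++ p), s; split; first exact: reachS R Rp.
split => //; split; first by rewrite E catA.
rewrite size_cat; lia.
Qed.

Lemma L9_sorted n (p s : seq 'I_n.+1) : L9 n (p ++ s) ->
  forall x y, x \in map val p -> y \in map val s -> x <= y.
Proof.
rewrite L9_char => -[t [E [P _]]] x y hx hy.
have S : sorted leq (map val (p ++ s)).
  by rewrite E /=; apply: sub_path P => a b /stepn_leq.
rewrite (sorted_pairwise leq_trans) map_cat pairwise_cat in S.
case/and3P: S => /allrelP H _ _.
exact: H.
Qed.

Lemma flat_const_size N a c :
  size (flatten [seq nseq N j | j <- iota a c]) = c * N.
Proof.
elim: c a => // c IH a /=.
by rewrite size_cat size_nseq IH mulSn.
Qed.

Lemma flat_const_nth N a c k : 0 < N -> k < c * N ->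
  nth 0 (flatten [seq nseq N j | j <- iota a c]) k = a + k %/ N.
Proof.
elim: c a k => [|c IH] a k hN hk; first by rewrite mul0n in hk.
rewrite /= nth_cat size_nseq nth_nseq.
case: (ltnP k N) => hkN; first by rewrite divn_small // addn0.
rewrite IH //; last by rewrite mulSn in hk; lia.
have : (1 * N + (k - N)) %/ N = 1 + (k - N) %/ N by rewrite divnMDl.
rewrite mul1n subnKC // => ->; lia.
Qed.

Lemma div_range N i k : i * N <= k < i * N + N -> k %/ N = i.
Proof.
case/andP=> h1 h2.
have hN : 0 < N by lia.
have -> : k = i * N + (k - i * N) by lia.
rewrite divnMDl // divn_small ?addn0 //; lia.
Qed.

From Stdlib Require Import ClassicalEpsilon.

Lemma part2 n : ~ in_RLV n (L9 n).
Proof.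
case=> m [G [hm HG]].
set M := Mb G; set N := M.+1.
have hN : N = M.+1 by [].
set w := flatten [seq nseq N i | i <- enum 'I_n.+1].
have Lw : L9 n w by exists (fun _ => N).
have Dw : derives G (rl_start G) w by apply/HG.
have Vw : map val w = flatten [seq nseq N j | j <- iota 0 n.+1] by apply: map_val_flat.
have Sw : size w = n.+1 * N by rewrite -(size_map val) Vw flat_const_size.
have Nw k : k < n.+1 * N -> nth 0 (map val w) k = k %/ N.
  by move=> hk; rewrite Vw flat_const_nth.
have Hb (i : 'I_n.+1) : i * N + N <= n.+1 * N.
  have hi : i.+1 * N <= n.+1 * N := leq_mul (ltn_ord i) (leqnn N).
  by rewrite mulSn addnC in hi.
have H (i : 'I_n.+1) : exists B : 'I_m, exists p s, reach G (rl_start G) p B /\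
    derives G B s /\ w = p ++ s /\ i * N < size p <= i * N + M.
  have := Hb i => hi.
  have [B [p [s HH]]] := @split_der _ _ G _ w (i * N) Dw ltac:(rewrite Sw; lia).
  by exists B, p, s.
have Mem (i : 'I_n.+1) p s : w = p ++ s -> i * N < size p <= i * N + M ->
    (nat_of_ord i \in map val p) /\ (nat_of_ord i \in map val s).
  move=> E hb; have := Hb i => hi.
  have Vc : map val w = map val p ++ map val s by rewrite E map_cat.
  have Ss : size w = size p + size s by rewrite E size_cat.
  split.
    have : nth 0 (map val w) (size p).-1 = i.
      rewrite Nw; last by lia.
      apply: div_range; lia.
    rewrite Vc nth_cat size_map ifT; last by rewrite ltn_predL; lia.
    move=> <-; apply: mem_nth; rewrite size_map ltn_predL; lia.
  have : nth 0 (map val w) (size p) = i.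
    rewrite Nw; last by lia.
    apply: div_range; lia.
  rewrite Vc nth_cat size_map ltnn subnn.
  move=> <-; apply: mem_nth; rewrite size_map; move: hb hi Ss Sw hN; generalize (i * N) => x; set sp := size p; set ss := size s; set sw := size w; lia.
pose f i := proj1_sig (constructive_indefinite_description _ (H i)).
have Hf i := proj2_sig (constructive_indefinite_description _ (H i)).
have finj : injective f.
  have key (i j : 'I_n.+1) : f i = f j -> i < j -> False.
    move=> Eij hij.
    have [pi [si [_ [Di [Ei bi]]]]] := Hf i.
    have [pj [sj [Rj [_ [Ej bj]]]]] := Hf j.
    rewrite -/(f i) in Di; rewrite -/(f j) in Rj.
    rewrite Eij in Di.
    have D := reach_derives Rj Di.
    have L : L9 n (pj ++ si) by apply/HG.
    have := L9_sorted L (proj1 (Mem j pj sj Ej bj)) (proj2 (Mem i pi si Ei bi)).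
    lia.
  move=> i j Eij; case: (ltngtP i j) => hij.
  - by case: (key _ _ Eij hij).
  - by case: (key _ _ (esym Eij) hij).
  - exact: val_inj.
have := @leq_card _ _ f finj; rewrite !card_ord; lia.
Qed.

Theorem mainTheorem20 (n : nat) (Hn : 1 <= n) :
  in_SLT 2 (L9 n) /\ ~ in_RLV n (L9 n).
Proof. split; [exact: part1 | exact: part2]. Qed.
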